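(* Let $(M,F)$ be a conic pseudo-Finsler surface which is Landsberg, and let $f$ be a smooth $h(0)$ function on $\mathcal A$. If $f$ is horizontally constant, then $f_{;2}$ and $f_{;2;2}$ are horizontally constant.
   Context: Throughout, $M$ is a smooth $2$-dimensional manifold, $TM_0$ its slit tangent bundle with induced local coordinates $(x^i,y^i)$, $\partial_i=\partial/\partial x^i$, $\dot\partial_i=\partial/\partial y^i$. A function is called $h(r)$ if it is positively homogeneous of degree $r$ in $y$. A conic pseudo-Finsler surface $(M,F)$ consists of a conic subbundle $\mathcal A\subset TM_0$ (an open set invariant under $y\mapsto\lambda y$, $\lambda>0$, projecting onto $M$) and a smooth $h(1)$ function $F:\mathcal A\to\mathbb R$ such that $g_{ij}=\frac12\dot\partial_i\dot\partial_jF^2$ is nondegenerate. Put $\ell_i=\dot\partial_iF$, $\ell^i=y^i/F$. Modified Berwald frame: $\varepsilon\in\{1,-1\}$ and a covector $m_i$ satisfy $g_{ij}=\ell_i\ell_j+\varepsilon m_im_j$, $m^i=g^{ij}m_j$, so $\ell^i\ell_i=1$, $\ell^im_i=0$, $m^im_i=\varepsilon$. The main scalar $\mathcal I$ ($h(0)$) is defined by $FC_{ijk}=\mathcal I\,m_im_jm_k$, where $C_{ijk}=\frac14\dot\partial_i\dot\partial_j\dot\partial_kF^2$. The geodesic spray of $F$ is $S=y^i\partial_i-2G^i\dot\partial_i$; $G^i_j=\dot\partial_jG^i$, $\delta_i=\partial_i-G^j_i\dot\partial_j$. For a smooth function $f$: $f_{;1}=y^i\dot\partial_if$, $f_{;2}=\varepsilon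 Fm^i\dot\partial_if$, $f_{,1}=\ell^i\delta_if$, $f_{,2}=\varepsilon m^i\delta_if$; iterated derivatives are read left to right, e.g. $f_{;2;2}=(f_{;2})_{;2}$. $f$ is horizontally constant if $\delta_if=0$ (i.e. $f_{,1}=f_{,2}=0$). $F$ is Landsberg if $\mathcal I_{,1}=0$. *)

(* Defs.v *)
(* Local (chart) formalization of a conic
   pseudo-Finsler surface: a point of TM is (x1,x2,y1,y2) in R^4. *)
From Stdlib Require Import Reals.
From Coquelicot Require Import Coquelicot.
Open Scope R_scope.

Definition pt : Type := (R * R * R * R)%type.

Inductive I2 : Type := i1 | i2.

Definition xc (i : I2) (p : pt) : R :=
  let '(x1, x2, _, _) := p in match i with i1 => x1 | i2 => x2 end.
Definition yc (i : I2) (p : pt) : R :=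
  let '(_, _, y1, y2) := p in match i with i1 => y1 | i2 => y2 end.

Definition setx (i : I2) (p : pt) (t : R) : pt :=
  let '(x1, x2, y1, y2) := p in
  match i with i1 => (t, x2, y1, y2) | i2 => (x1, t, y1, y2) end.
Definition sety (i : I2) (p : pt) (t : R) : pt :=
  let '(x1, x2, y1, y2) := p in
  match i with i1 => (x1, x2, t, y2) | i2 => (x1, x2, y1, t) end.

Definition scale (l : R) (p : pt) : pt :=
  let '(x1, x2, y1, y2) := p in (x1, x2, l * y1, l * y2).

Definition sum2 (h : I2 -> R) : R := h i1 + h i2.

Definition dx (i : I2) (f : pt -> R) (p : pt) : R :=
  Derive (fun t => f (setx i p t)) (xc i p).
Definition dy (i : I2) (f : pt -> R) (p : pt) : R :=
  Derive (fun t => f (sety i p t)) (yc i p).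

Fixpoint Ck (k : nat) (A : pt -> Prop) (f : pt -> R) : Prop :=
  match k with
  | O => forall p, A p -> continuous f p
  | S k' => (forall p, A p -> continuous f p) /\
      (forall i p, A p -> ex_derive (fun t => f (setx i p t)) (xc i p)
                       /\ ex_derive (fun t => f (sety i p t)) (yc i p)) /\
      (forall i, Ck k' A (dx i f) /\ Ck k' A (dy i f))
  end.
Definition smooth_on (A : pt -> Prop) (f : pt -> R) : Prop := forall k, Ck k A f.

Definition homog (A : pt -> Prop) (r : nat) (f : pt -> R) : Prop :=
  forall p l, A p -> 0 < l -> f (scale l p) = l ^ r * f p.

Definition conic (A : pt -> Prop) : Prop :=
  open A /\ (forall p, A p -> (yc i1 p <> 0 \/ yc i2 p <> 0)) /\
  (forall p l, A p -> 0 < l -> A (scale l p)).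

Section Finsler.
Variable F : pt -> R.

Definition F2 (p : pt) : R := F p ^ 2.
Definition g (i j : I2) (p : pt) : R := / 2 * dy i (dy j F2) p.
Definition detg (p : pt) : R := g i1 i1 p * g i2 i2 p - g i1 i2 p * g i2 i1 p.
Definition ginv (i j : I2) (p : pt) : R :=
  match i, j with
  | i1, i1 => g i2 i2 p / detg p
  | i2, i2 => g i1 i1 p / detg p
  | i1, i2 => - g i1 i2 p / detg p
  | i2, i1 => - g i2 i1 p / detg p
  end.
Definition ell_low (i : I2) (p : pt) : R := dy i F p.
Definition ell_up (i : I2) (p : pt) : R := yc i p / F p.
Definition Cart (i j k : I2) (p : pt) : R := / 4 * dy i (dy j (dy k F2)) p.
(* geodesic spray coefficients: S = y^i d_i - 2 G^i dot-d_i *)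
Definition Gs (i : I2) (p : pt) : R :=
  / 4 * sum2 (fun l => ginv i l p *
      (sum2 (fun k => yc k p * dx k (dy l F2) p) - dx l F2 p)).
Definition Gij (i j : I2) (p : pt) : R := dy j (Gs i) p.
Definition delta (i : I2) (f : pt -> R) (p : pt) : R :=
  dx i f p - sum2 (fun j => Gij j i p * dy j f p).

Section Frame.
Variables (eps : R) (m : I2 -> pt -> R).
Definition mup (i : I2) (p : pt) : R := sum2 (fun j => ginv i j p * m j p).
(* f_{;2} = eps F m^i dot-d_i f *)
Definition semi2 (f : pt -> R) (p : pt) : R :=
  eps * F p * sum2 (fun i => mup i p * dy i f p).
Definition comma1 (f : pt -> R) (p : pt) : R :=
  sum2 (fun i => ell_up i p * delta i f p).
End Frame.
End Finsler.

Definition pseudo_finsler (A : pt -> Prop) (F : pt -> R) : Prop :=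
  conic A /\ smooth_on A F /\ homog A 1 F /\ (forall p, A p -> detg F p <> 0).

Definition berwald_frame (A : pt -> Prop) (F : pt -> R) (eps : R)
  (m : I2 -> pt -> R) (I : pt -> R) : Prop :=
  (eps = 1 \/ eps = -1) /\ (forall i, smooth_on A (m i)) /\ smooth_on A I /\
  (forall p i j, A p ->
     g F i j p = ell_low F i p * ell_low F j p + eps * m i p * m j p) /\
  (forall p i j k, A p -> F p * Cart F i j k p = I p * m i p * m j p * m k p).

Definition horiz_const (A : pt -> Prop) (F : pt -> R) (f : pt -> R) : Prop :=
  forall p i, A p -> delta F i f p = 0.

(* Main.v *)
Require Import Defs.
From Stdlib Require Import Reals Lra.
From Coquelicot Require Import Coquelicot.
Open Scope R_scope.

Inductive dir : Type := DX (i : I2) | DY (i : I2).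
Definition setd (d : dir) (p : pt) (t : R) : pt :=
  match d with DX i => setx i p t | DY i => sety i p t end.
Definition cd (d : dir) (p : pt) : R :=
  match d with DX i => xc i p | DY i => yc i p end.
Definition dd (d : dir) (u : pt -> R) (p : pt) : R :=
  Derive (fun t => u (setd d p t)) (cd d p).

Lemma dir_eq_dec (d e : dir) : {d = e} + {d <> e}.
Proof. decide equality; decide equality. Defined.

Lemma setd_cd d p : setd d p (cd d p) = p.
Proof. destruct p as [[[a b] c] e]; destruct d as [[]|[]]; reflexivity. Qed.
Lemma cd_setd d p t : cd d (setd d p t) = t.
Proof. destruct p as [[[a b] c] e]; destruct d as [[]|[]]; reflexivity. Qed.
Lemma setd_setd d p s t : setd d (setd d p s) t = setd d p t.
Proof. destruct p as [[[a b] c] e]; destruct d as [[]|[]]; reflexivity. Qed.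
Lemma cd_setd_ne d e p t : d <> e -> cd e (setd d p t) = cd e p.
Proof. destruct p as [[[a b] c] f]; destruct d as [[]|[]]; destruct e as [[]|[]];
  intros H; try reflexivity; congruence. Qed.
Lemma setd_comm d e p s t : d <> e -> setd d (setd e p s) t = setd e (setd d p t) s.
Proof. destruct p as [[[a b] c] f]; destruct d as [[]|[]]; destruct e as [[]|[]];
  intros H; try reflexivity; congruence. Qed.
Lemma cd_setd_gen d e p t : cd e (setd d p t) = if dir_eq_dec d e then t else cd e p.
Proof. destruct (dir_eq_dec d e). subst; apply cd_setd. now apply cd_setd_ne. Qed.

Lemma pt_ball_iff (p q : pt) (eps : R) :
  ball p eps q <-> (forall d, Rabs (cd d q - cd d p) < eps).
Proof.
  destruct p as [[[a b] c] e]; destruct q as [[[a' b'] c'] e'].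
  cbn. unfold prod_ball, AbsRing_ball, abs, minus, plus, opp; cbn.
  split.
  - intros [[[H1 H2] H3] H4] [[]|[]]; cbn; auto.
  - intros H. repeat split.
    apply (H (DX i1)). apply (H (DX i2)). apply (H (DY i1)). apply (H (DY i2)).
Qed.
Section Loc.
Variable A : pt -> Prop.
Hypothesis HA : open A.

Lemma open_box p : A p -> exists e : posreal,
  forall q, (forall d, Rabs (cd d q - cd d p) < e) -> A q.
Proof.
  intros Hp. destruct (HA p Hp) as [e He]. exists e. intros q Hq.
  apply He. now apply pt_ball_iff.
Qed.

Lemma near_line d p : A p -> locally (cd d p) (fun t => A (setd d p t)).
Proof.
  intros Hp. destruct (open_box p Hp) as [e He]. exists e. intros t Ht.
  apply He. intros c. rewrite cd_setd_gen. destruct (dir_eq_dec d c).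
  - subst. exact Ht.
  - rewrite Rminus_eq_0, Rabs_R0. apply cond_pos.
Qed.

Lemma near_2d d e p : A p -> d <> e ->
  exists eps : posreal, forall s t, Rabs (s - cd d p) < eps -> Rabs (t - cd e p) < eps ->
    A (setd e (setd d p s) t).
Proof.
  intros Hp Hde. destruct (open_box p Hp) as [r Hr]. exists r. intros s t Hs Ht.
  apply Hr. intros c. rewrite cd_setd_gen. destruct (dir_eq_dec e c).
  - subst. exact Ht.
  - rewrite cd_setd_gen. destruct (dir_eq_dec d c).
    + subst. exact Hs.
    + rewrite Rminus_eq_0, Rabs_R0. apply cond_pos.
Qed.
End Loc.

Lemma slice_cont d e p x y :
  filterlim (fun z : R * R => setd e (setd d p (fst z)) (snd z)) (locally (x, y))
    (locally (setd e (setd d p x) y)).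
Proof.
  apply filterlim_locally. intros eps. exists eps. intros [s t] [Hs Ht].
  cbn in Hs, Ht. unfold AbsRing_ball, abs, minus, plus, opp in Hs, Ht; cbn in Hs, Ht.
  apply pt_ball_iff. intros c. rewrite !cd_setd_gen.
  destruct (dir_eq_dec e c). exact Ht.
  destruct (dir_eq_dec d c). exact Hs.
  rewrite Rminus_eq_0, Rabs_R0. apply cond_pos.
Qed.

Lemma line_cont d p x :
  filterlim (fun t : R => setd d p t) (locally x) (locally (setd d p x)).
Proof.
  apply filterlim_locally. intros eps. exists eps. intros t Ht.
  cbn in Ht. unfold AbsRing_ball, abs, minus, plus, opp in Ht; cbn in Ht.
  apply pt_ball_iff. intros c. rewrite !cd_setd_gen.
  destruct (dir_eq_dec d c). exact Ht.
  rewrite Rminus_eq_0, Rabs_R0. apply cond_pos.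
Qed.
Section CkS.
Variable A : pt -> Prop.
Hypothesis HA : open A.
Implicit Types (u v : pt -> R) (p q : pt) (d e : dir) (k : nat).

Lemma Ck_S_iff k u : Ck (S k) A u <->
  ((forall p, A p -> continuous u p) /\
   (forall d p, A p -> ex_derive (fun t => u (setd d p t)) (cd d p)) /\
   (forall d, Ck k A (dd d u))).
Proof.
  cbn [Ck]. split.
  - intros [H1 [H2 H3]]. split; [exact H1|split].
    + intros [i|i] p Hp; apply (H2 i p Hp).
    + intros [i|i]; apply (H3 i).
  - intros [H1 [H2 H3]]. split; [exact H1|split].
    + intros i p Hp. split; [apply (H2 (DX i) p Hp)|apply (H2 (DY i) p Hp)].
    + intros i. split; [apply (H3 (DX i))|apply (H3 (DY i))].
Qed.

Lemma Ck_cont k u p : Ck k A u -> A p -> continuous u p.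
Proof. destruct k; cbn [Ck]; intros H; [apply H| apply H]. Qed.

Lemma loc_eq u v p : (forall q, A q -> u q = v q) -> A p -> locally p (fun q => u q = v q).
Proof. intros H Hp. apply (filter_imp A); [exact H| exact (HA p Hp)]. Qed.

Lemma line_eq u v d p : (forall q, A q -> u q = v q) -> A p ->
  locally (cd d p) (fun t => u (setd d p t) = v (setd d p t)).
Proof. intros H Hp. apply (filter_imp (fun t => A (setd d p t))).
  intros t Ht; apply H, Ht. now apply near_line. Qed.

Lemma dd_ext_loc u v d p : (forall q, A q -> u q = v q) -> A p -> dd d u p = dd d v p.
Proof. intros H Hp. unfold dd. apply Derive_ext_loc. now apply line_eq. Qed.

Lemma Ck_ext k : forall u v, (forall q, A q -> u q = v q) -> Ck k A u -> Ck k A v.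
Proof.
  induction k as [|k IH]; intros u v Huv Hu.
  - cbn in *. intros p Hp. apply (continuous_ext_loc v u).
    + apply (filter_imp A); [intros q Hq; apply Huv, Hq| exact (HA p Hp)].
    + apply Hu, Hp.
  - apply Ck_S_iff in Hu as [H1 [H2 H3]]. apply Ck_S_iff. split; [|split].
    + intros p Hp. apply (continuous_ext_loc v u).
      apply (filter_imp A); [intros q Hq; apply Huv, Hq| exact (HA p Hp)].
      apply H1, Hp.
    + intros d p Hp. apply (ex_derive_ext_loc (fun t => u (setd d p t))).
      now apply line_eq. apply H2, Hp.
    + intros d. apply (IH (dd d u)); [|apply H3]. intros q Hq. now apply dd_ext_loc.
Qed.

Lemma Ck_mono k : forall u, Ck (S k) A u -> Ck k A u.
Proof.
  induction k as [|k IH]; intros u Hu.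
  - apply Ck_S_iff in Hu. cbn. apply Hu.
  - apply Ck_S_iff in Hu as [H1 [H2 H3]]. apply Ck_S_iff. repeat split; auto.
Qed.

Lemma dd_const d (c : R) p : dd d (fun _ => c) p = 0.
Proof. unfold dd. apply Derive_const. Qed.

Lemma Ck_const k : forall (c : R), Ck k A (fun _ => c).
Proof.
  induction k as [|k IH]; intros c.
  - intros p _. apply continuous_const.
  - apply Ck_S_iff. split; [|split].
    + intros p _. apply continuous_const.
    + intros d p _. apply ex_derive_const.
    + intros d. apply (Ck_ext k (fun _ => 0)); [|apply IH].
      intros q _. symmetry. apply dd_const.
Qed.

Lemma Ck_plus k : forall u v, Ck k A u -> Ck k A v -> Ck k A (fun q => u q + v q).
Proof.
  induction k as [|k IH]; intros u v Hu Hv.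
  - intros p Hp. apply (continuous_plus u v); [apply Hu|apply Hv]; exact Hp.
  - apply Ck_S_iff in Hu as [U1 [U2 U3]]. apply Ck_S_iff in Hv as [V1 [V2 V3]].
    apply Ck_S_iff. split; [|split].
    + intros p Hp. apply (continuous_plus u v); auto.
    + intros d p Hp. apply (ex_derive_plus (fun t => u (setd d p t)) (fun t => v (setd d p t))); auto.
    + intros d. apply (Ck_ext k (fun q => dd d u q + dd d v q)); [|apply IH; auto].
      intros q Hq. unfold dd. symmetry.
      apply (Derive_plus (fun t => u (setd d q t)) (fun t => v (setd d q t))); auto.
Qed.

Lemma Ck_mult k : forall u v, Ck k A u -> Ck k A v -> Ck k A (fun q => u q * v q).
Proof.
  induction k as [|k IH]; intros u v Hu Hv.
  - intros p Hp. apply (continuous_mult u v); [apply Hu|apply Hv]; exact Hp.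
  - pose proof (Ck_mono _ _ Hu) as Hu'. pose proof (Ck_mono _ _ Hv) as Hv'.
    apply Ck_S_iff in Hu as [U1 [U2 U3]]. apply Ck_S_iff in Hv as [V1 [V2 V3]].
    apply Ck_S_iff. split; [|split].
    + intros p Hp. apply (continuous_mult u v); auto.
    + intros d p Hp. apply (ex_derive_mult (fun t => u (setd d p t)) (fun t => v (setd d p t))); auto.
    + intros d. apply (Ck_ext k (fun q => dd d u q * v q + u q * dd d v q)).
      * intros q Hq. unfold dd. symmetry.
        rewrite (Derive_mult (fun t => u (setd d q t)) (fun t => v (setd d q t))); auto.
        rewrite setd_cd. reflexivity.
      * apply Ck_plus; apply IH; auto.
Qed.

Lemma Ck_inv k : forall u, Ck k A u -> (forall q, A q -> u q <> 0) -> Ck k A (fun q => / u q).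
Proof.
  induction k as [|k IH]; intros u Hu Hnz.
  - intros p Hp. apply (continuous_comp u (fun x => / x)); [apply Hu, Hp| apply continuous_Rinv, Hnz, Hp].
  - pose proof (Ck_mono _ _ Hu) as Hu'.
    apply Ck_S_iff in Hu as [U1 [U2 U3]].
    apply Ck_S_iff. split; [|split].
    + intros p Hp. apply (continuous_comp u (fun x => / x)); [apply U1, Hp| apply continuous_Rinv, Hnz, Hp].
    + intros d p Hp. apply (ex_derive_inv (fun t => u (setd d p t))); auto.
      rewrite setd_cd. auto.
    + intros d. apply (Ck_ext k (fun q => (-1) * dd d u q * (/ u q * / u q))).
      * intros q Hq. unfold dd. rewrite (Derive_inv (fun t => u (setd d q t))); auto.
        2: rewrite setd_cd; auto. rewrite setd_cd. specialize (Hnz q Hq). field. auto.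
      * apply Ck_mult. apply Ck_mult. apply Ck_const. auto. apply Ck_mult; apply IH; auto.
Qed.

Lemma dd_cd d (c : dir) p : dd d (cd c) p = if dir_eq_dec d c then 1 else 0.
Proof.
  unfold dd. destruct (dir_eq_dec d c) as [->|Hne].
  - rewrite (Derive_ext _ (fun t => t)). apply Derive_id. intros t; apply cd_setd.
  - rewrite (Derive_ext _ (fun _ => cd c p)). apply Derive_const. intros t; now apply cd_setd_ne.
Qed.

Lemma cd_cont (c : dir) p : continuous (cd c) p.
Proof.
  apply filterlim_locally. intros eps. exists eps. intros q Hq.
  pose proof (proj1 (pt_ball_iff p q eps) Hq c) as H.
  cbn. unfold AbsRing_ball, abs, minus, plus, opp; cbn. exact H.
Qed.

Lemma Ck_cd k (c : dir) : Ck k A (cd c).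
Proof.
  destruct k as [|k].
  - intros p _. apply cd_cont.
  - apply Ck_S_iff. split; [|split].
    + intros p Hp. apply cd_cont.
    + intros d p _. destruct (dir_eq_dec d c) as [->|Hne].
      * apply (ex_derive_ext (fun t => t)). intros t; symmetry; apply cd_setd. apply ex_derive_id.
      * apply (ex_derive_ext (fun _ => cd c p)). intros t; symmetry; now apply cd_setd_ne.
        apply ex_derive_const.
    + intros d. apply (Ck_ext k (fun _ => if dir_eq_dec d c then 1 else 0)).
      intros q _. symmetry. apply dd_cd. apply Ck_const.
Qed.
End CkS.
Section SmS.
Variable A : pt -> Prop.
Hypothesis HA : open A.
Implicit Types (u v w : pt -> R) (p q : pt) (d e : dir) (k : nat).
Definition Sm u := smooth_on A u.

Lemma Sm_cont u p : Sm u -> A p -> continuous u p.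
Proof. intros H Hp. exact (Ck_cont A 0 u p (H 0%nat) Hp). Qed.
Lemma Sm_ex u d p : Sm u -> A p -> ex_derive (fun t => u (setd d p t)) (cd d p).
Proof. intros H Hp. destruct (proj1 (Ck_S_iff A 0 u) (H 1%nat)) as [_ [H2 _]]. auto. Qed.
Lemma Sm_dd u d : Sm u -> Sm (dd d u).
Proof. intros H k. destruct (proj1 (Ck_S_iff A k u) (H (S k))) as [_ [_ H3]]. auto. Qed.
Lemma Sm_dx u i : Sm u -> Sm (dx i u).
Proof. apply (Sm_dd u (DX i)). Qed.
Lemma Sm_dy u i : Sm u -> Sm (dy i u).
Proof. apply (Sm_dd u (DY i)). Qed.
Lemma Sm_ext u v : (forall q, A q -> u q = v q) -> Sm u -> Sm v.
Proof. intros H Hu k. apply (Ck_ext A HA k u v H (Hu k)). Qed.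
Lemma Sm_const (c : R) : Sm (fun _ => c).
Proof. intros k. apply Ck_const; auto. Qed.
Lemma Sm_plus u v : Sm u -> Sm v -> Sm (fun q => u q + v q).
Proof. intros Hu Hv k. apply Ck_plus; auto. Qed.
Lemma Sm_mult u v : Sm u -> Sm v -> Sm (fun q => u q * v q).
Proof. intros Hu Hv k. apply Ck_mult; auto. Qed.
Lemma Sm_inv u : Sm u -> (forall q, A q -> u q <> 0) -> Sm (fun q => / u q).
Proof. intros Hu Hnz k. apply Ck_inv; auto. Qed.
Lemma Sm_cd (c : dir) : Sm (cd c).
Proof. intros k. apply Ck_cd; auto. Qed.
Lemma Sm_yc i : Sm (yc i).
Proof. exact (Sm_cd (DY i)). Qed.
Lemma Sm_scal (c : R) u : Sm u -> Sm (fun q => c * u q).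
Proof. intros Hu. apply Sm_mult; auto using Sm_const. Qed.
Lemma Sm_opp u : Sm u -> Sm (fun q => - u q).
Proof. intros Hu. apply (Sm_ext (fun q => -1 * u q)). intros; ring. now apply Sm_scal. Qed.
Lemma Sm_minus u v : Sm u -> Sm v -> Sm (fun q => u q - v q).
Proof. intros Hu Hv. apply Sm_plus; auto using Sm_opp. Qed.
Lemma Sm_div u v : Sm u -> Sm v -> (forall q, A q -> v q <> 0) -> Sm (fun q => u q / v q).
Proof. intros Hu Hv Hnz. apply Sm_mult; auto using Sm_inv. Qed.
Lemma Sm_sum2 (w : I2 -> pt -> R) : (forall i, Sm (w i)) -> Sm (fun q => sum2 (fun i => w i q)).
Proof. intros H. unfold sum2. apply Sm_plus; auto. Qed.
Lemma Sm_pow2 u : Sm u -> Sm (fun q => u q ^ 2).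
Proof. intros Hu. apply (Sm_ext (fun q => u q * u q)). intros; ring. now apply Sm_mult. Qed.

Lemma dd_ext u v d p : (forall q, u q = v q) -> dd d u p = dd d v p.
Proof. intros H. unfold dd. apply Derive_ext. intros; apply H. Qed.
Lemma dd_plus u v d p : Sm u -> Sm v -> A p ->
  dd d (fun q => u q + v q) p = dd d u p + dd d v p.
Proof. intros Hu Hv Hp. unfold dd.
  apply (Derive_plus (fun t => u (setd d p t)) (fun t => v (setd d p t))); now apply Sm_ex. Qed.
Lemma dd_mult u v d p : Sm u -> Sm v -> A p ->
  dd d (fun q => u q * v q) p = dd d u p * v p + u p * dd d v p.
Proof. intros Hu Hv Hp. unfold dd.
  rewrite (Derive_mult (fun t => u (setd d p t)) (fun t => v (setd d p t))); try now apply Sm_ex.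
  rewrite setd_cd. reflexivity. Qed.
Lemma dd_scal (c : R) u d p : dd d (fun q => c * u q) p = c * dd d u p.
Proof. unfold dd. apply Derive_scal. Qed.
Lemma dd_opp u d p : dd d (fun q => - u q) p = - dd d u p.
Proof. unfold dd. apply Derive_opp. Qed.
Lemma dd_minus u v d p : Sm u -> Sm v -> A p ->
  dd d (fun q => u q - v q) p = dd d u p - dd d v p.
Proof. intros Hu Hv Hp. unfold Rminus. rewrite dd_plus; auto using Sm_opp.
  now rewrite dd_opp. Qed.
Lemma dd_inv u d p : Sm u -> A p -> u p <> 0 ->
  dd d (fun q => / u q) p = - dd d u p / u p ^ 2.
Proof. intros Hu Hp Hnz. unfold dd.
  rewrite (Derive_inv (fun t => u (setd d p t))); rewrite ?setd_cd; auto. now apply Sm_ex. Qed.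
Lemma dd_sum2 (w : I2 -> pt -> R) d p : (forall i, Sm (w i)) -> A p ->
  dd d (fun q => sum2 (fun i => w i q)) p = sum2 (fun i => dd d (w i) p).
Proof. intros H Hp. unfold sum2. apply dd_plus; auto. Qed.
Lemma dd_zero u d p : (forall q, A q -> u q = 0) -> A p -> dd d u p = 0.
Proof. intros H Hp. rewrite (dd_ext_loc A HA u (fun _ => 0)); auto. apply dd_const. Qed.

Lemma Sm_ex' u d q s : Sm u -> A q -> cd d q = s -> ex_derive (fun t => u (setd d q t)) s.
Proof. intros Hu Hq <-. now apply Sm_ex. Qed.

Lemma K1 d e p s t z : d <> e -> setd d (setd e (setd d p s) t) z = setd e (setd d p z) t.
Proof. intros H. rewrite setd_comm by auto. now rewrite setd_setd. Qed.
Lemma K3 d e p s t : d <> e -> cd d (setd e (setd d p s) t) = s.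
Proof. intros H. rewrite cd_setd_ne by auto. apply cd_setd. Qed.

Lemma slice_cont2 w d e p : A p -> continuous w p ->
  continuity_2d_pt (fun s t => w (setd e (setd d p s) t)) (cd d p) (cd e p).
Proof.
  intros Hp Hw. apply continuity_2d_pt_filterlim.
  eapply filterlim_comp. apply slice_cont.
  rewrite setd_cd, setd_cd. exact Hw.
Qed.

Lemma schwarz u d e p : Sm u -> A p -> dd d (dd e u) p = dd e (dd d u) p.
Proof.
  intros Hu Hp. destruct (dir_eq_dec d e) as [->|Hde]; [reflexivity|].
  set (f := fun s t => u (setd e (setd d p s) t)).
  assert (E1 : forall s t, Derive (fun t' => f s t') t = dd e u (setd e (setd d p s) t)).
  { intros s t. unfold dd, f. rewrite cd_setd. apply Derive_ext. intros t'. now rewrite setd_setd. }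
  assert (E2 : forall s t, Derive (fun s' => f s' t) s = dd d u (setd e (setd d p s) t)).
  { intros s t. unfold dd, f. rewrite K3 by auto. apply Derive_ext. intros s'. now rewrite K1. }
  assert (E3 : forall s t, Derive (fun z => Derive (fun t' => f z t') t) s
                 = dd d (dd e u) (setd e (setd d p s) t)).
  { intros s t. unfold dd at 1. rewrite K3 by auto. apply Derive_ext. intros z.
    rewrite E1. now rewrite K1. }
  assert (E4 : forall s t, Derive (fun z => Derive (fun s' => f s' z) s) t
                 = dd e (dd d u) (setd e (setd d p s) t)).
  { intros s t. unfold dd at 1. rewrite cd_setd. apply Derive_ext. intros z.
    rewrite E2. now rewrite setd_setd. }
  assert (L : dd d (dd e u) p = Derive (fun z => Derive (fun t => f z t) (cd e p)) (cd d p)).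
  { rewrite E3. now rewrite !setd_cd. }
  assert (R' : dd e (dd d u) p = Derive (fun z => Derive (fun t => f t z) (cd d p)) (cd e p)).
  { rewrite E4. now rewrite !setd_cd. }
  rewrite L, R'. apply Schwarz.
  - destruct (near_2d A HA d e p Hp Hde) as [eps Heps]. exists eps. intros s t Hs Ht.
    specialize (Heps s t Hs Ht). set (q := setd e (setd d p s) t) in *.
    split; [|split; [|split]].
    + apply (ex_derive_ext (fun z => u (setd d q z))).
      intros z. unfold f, q. now rewrite K1.
      apply Sm_ex'; auto. unfold q; now apply K3.
    + apply (ex_derive_ext (fun z => u (setd e q z))).
      intros z. unfold f, q. now rewrite setd_setd.
      apply Sm_ex'; auto. unfold q; apply cd_setd.
    + apply (ex_derive_ext (fun z => dd e u (setd d q z))).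
      intros z. rewrite E1. unfold q. now rewrite K1.
      apply Sm_ex'; auto. now apply Sm_dd. unfold q; now apply K3.
    + apply (ex_derive_ext (fun z => dd d u (setd e q z))).
      intros z. rewrite E2. unfold q. now rewrite setd_setd.
      apply Sm_ex'; auto. now apply Sm_dd. unfold q; apply cd_setd.
  - apply (continuity_2d_pt_ext (fun s t => dd d (dd e u) (setd e (setd d p s) t))).
    intros; now rewrite E3. apply slice_cont2; auto. apply Sm_cont; auto. now do 2 apply Sm_dd.
  - apply (continuity_2d_pt_ext (fun s t => dd e (dd d u) (setd e (setd d p s) t))).
    intros; now rewrite E4. apply slice_cont2; auto. apply Sm_cont; auto. now do 2 apply Sm_dd.
Qed.
End SmS.
Section Eul.
Variable A : pt -> Prop.
Hypothesis HA : open A.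
Implicit Types (u v w : pt -> R) (p q : pt) (d e : dir).

Lemma euler_homog u r p : Sm A u -> homog A r u -> A p ->
  sum2 (fun k => yc k p * dy k u p) = INR r * u p.
Proof.
  intros Hu Hh Hp.
  set (d := DY i1). set (e := DY i2).
  assert (Hde : d <> e) by (unfold d, e; congruence).
  set (phi := fun a b => u (setd e (setd d p a) b)).
  set (y1 := cd d p). set (y2 := cd e p).
  set (dfx := fun a b => dd d u (setd e (setd d p a) b)).
  assert (D : differentiable_pt_lim phi y1 y2 (dd d u p) (dd e u p)).
  { apply filterdiff_differentiable_pt_lim.
    assert (Hx : dd d u p = dfx y1 y2).
    { unfold dfx, y1, y2. now rewrite !setd_cd. }
    rewrite Hx.
    apply (is_derive_filterdiff phi y1 y2 dfx (dd e u p)).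
    - apply (proj1 (locally_2d_locally (fun a b => is_derive (fun z => phi z b) a (dfx a b)) y1 y2)).
      destruct (near_2d A HA d e p Hp Hde) as [eps Heps]. exists eps. intros s t Hs Ht.
      specialize (Heps s t Hs Ht). set (q := setd e (setd d p s) t) in *.
      assert (Eq : forall z, phi z t = u (setd d q z)).
      { intros z. unfold phi, q. now rewrite K1. }
      apply (is_derive_ext (fun z => u (setd d q z))). intros z; now rewrite Eq.
      unfold dfx. fold q. unfold dd.
      replace s with (cd d q) at 1 by (unfold q; now apply K3).
      apply Derive_correct. now apply (Sm_ex A).
    - apply (is_derive_ext (fun z => u (setd e p z))).
      intros z. unfold phi, y1. now rewrite setd_cd.
      apply Derive_correct. now apply (Sm_ex A).
    - unfold continuous. unfold dfx.
      eapply filterlim_comp. apply slice_cont. unfold y1, y2. rewrite !setd_cd.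
      apply (Sm_cont A); auto. now apply (Sm_dd A). }
  assert (C : derivable_pt_lim (fun l => phi (l * y1) (l * y2)) 1
               (dd d u p * y1 + dd e u p * y2)).
  { apply derivable_pt_lim_comp_2d.
    - rewrite !Rmult_1_l. exact D.
    - apply is_derive_Reals. auto_derive; auto; ring.
    - apply is_derive_Reals. auto_derive; auto; ring. }
  assert (Hsc : forall l, phi (l * y1) (l * y2) = u (scale l p)).
  { intros l. unfold phi, y1, y2. destruct p as [[[a b] c] f]. reflexivity. }
  assert (P : derivable_pt_lim (fun l => l ^ r * u p) 1 (INR r * u p)).
  { apply is_derive_Reals. auto_derive; auto. rewrite pow1; ring. }
  apply is_derive_Reals in C. apply is_derive_Reals in P.
  apply is_derive_unique in C. apply is_derive_unique in P.
  assert (E : Derive (fun l => phi (l * y1) (l * y2)) 1 = Derive (fun l => l ^ r * u p) 1).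
  { apply Derive_ext_loc. exists (mkposreal 1 Rlt_0_1). intros l Hl.
    cbn in Hl. unfold AbsRing_ball, abs, minus, plus, opp in Hl; cbn in Hl.
    rewrite Hsc. apply Hh; auto. apply Rabs_def2 in Hl. lra. }
  rewrite C, P in E. unfold sum2. unfold y1, y2, d, e in E. cbn in E.
  change (dy i1 u p) with (dd (DY i1) u p). change (dy i2 u p) with (dd (DY i2) u p).
  rewrite <- E. ring.
Qed.
End Eul.
Definition kd (i j : I2) : R :=
  match i, j with i1, i1 => 1 | i2, i2 => 1 | _, _ => 0 end.

Section Rules.
Variable A : pt -> Prop.
Hypothesis HA : open A.
Implicit Types (u v w : pt -> R) (p q : pt) (d e : dir).
Local Notation Sm := (Sm A).

Lemma dy_plus u v i p : Sm u -> Sm v -> A p -> dy i (fun q => u q + v q) p = dy i u p + dy i v p.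
Proof. exact (dd_plus A u v (DY i) p). Qed.
Lemma dx_plus u v i p : Sm u -> Sm v -> A p -> dx i (fun q => u q + v q) p = dx i u p + dx i v p.
Proof. exact (dd_plus A u v (DX i) p). Qed.
Lemma dy_minus u v i p : Sm u -> Sm v -> A p -> dy i (fun q => u q - v q) p = dy i u p - dy i v p.
Proof. exact (dd_minus A HA u v (DY i) p). Qed.
Lemma dx_minus u v i p : Sm u -> Sm v -> A p -> dx i (fun q => u q - v q) p = dx i u p - dx i v p.
Proof. exact (dd_minus A HA u v (DX i) p). Qed.
Lemma dy_mult u v i p : Sm u -> Sm v -> A p -> dy i (fun q => u q * v q) p = dy i u p * v p + u p * dy i v p.
Proof. exact (dd_mult A u v (DY i) p). Qed.
Lemma dx_mult u v i p : Sm u -> Sm v -> A p -> dx i (fun q => u q * v q) p = dx i u p * v p + u p * dx i v p.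
Proof. exact (dd_mult A u v (DX i) p). Qed.
Lemma dy_scal (c : R) u i p : dy i (fun q => c * u q) p = c * dy i u p.
Proof. exact (dd_scal c u (DY i) p). Qed.
Lemma dx_scal (c : R) u i p : dx i (fun q => c * u q) p = c * dx i u p.
Proof. exact (dd_scal c u (DX i) p). Qed.
Lemma dy_inv u i p : Sm u -> A p -> u p <> 0 -> dy i (fun q => / u q) p = - dy i u p / u p ^ 2.
Proof. exact (dd_inv A u (DY i) p). Qed.
Lemma dx_inv u i p : Sm u -> A p -> u p <> 0 -> dx i (fun q => / u q) p = - dx i u p / u p ^ 2.
Proof. exact (dd_inv A u (DX i) p). Qed.
Lemma dy_sum2 (w : I2 -> pt -> R) i p : (forall j, Sm (w j)) -> A p ->
  dy i (fun q => sum2 (fun j => w j q)) p = sum2 (fun j => dy i (w j) p).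
Proof. exact (dd_sum2 A w (DY i) p). Qed.
Lemma dx_sum2 (w : I2 -> pt -> R) i p : (forall j, Sm (w j)) -> A p ->
  dx i (fun q => sum2 (fun j => w j q)) p = sum2 (fun j => dx i (w j) p).
Proof. exact (dd_sum2 A w (DX i) p). Qed.
Lemma dy_const (c : R) i p : dy i (fun _ => c) p = 0.
Proof. exact (dd_const (DY i) c p). Qed.
Lemma dx_const (c : R) i p : dx i (fun _ => c) p = 0.
Proof. exact (dd_const (DX i) c p). Qed.
Lemma dy_yc i j p : dy i (yc j) p = kd i j.
Proof. change (dd (DY i) (cd (DY j)) p = kd i j). rewrite dd_cd.
  destruct i, j; cbn; try reflexivity; destruct dir_eq_dec; congruence. Qed.
Lemma dx_yc i j p : dx i (yc j) p = 0.
Proof. change (dd (DX i) (cd (DY j)) p = 0). rewrite dd_cd.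
  destruct dir_eq_dec; congruence. Qed.
Lemma dy_loc u v i p : (forall q, A q -> u q = v q) -> A p -> dy i u p = dy i v p.
Proof. exact (dd_ext_loc A HA u v (DY i) p). Qed.
Lemma dx_loc u v i p : (forall q, A q -> u q = v q) -> A p -> dx i u p = dx i v p.
Proof. exact (dd_ext_loc A HA u v (DX i) p). Qed.
Lemma dy_zero u i p : (forall q, A q -> u q = 0) -> A p -> dy i u p = 0.
Proof. exact (dd_zero A HA u (DY i) p). Qed.
Lemma dx_zero u i p : (forall q, A q -> u q = 0) -> A p -> dx i u p = 0.
Proof. exact (dd_zero A HA u (DX i) p). Qed.
Lemma dy_ext u v i p : (forall q, u q = v q) -> dy i u p = dy i v p.
Proof. exact (dd_ext u v (DY i) p). Qed.
Lemma dx_ext u v i p : (forall q, u q = v q) -> dx i u p = dx i v p.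
Proof. exact (dd_ext u v (DX i) p). Qed.
Lemma sw_yy u i j p : Sm u -> A p -> dy i (dy j u) p = dy j (dy i u) p.
Proof. exact (schwarz A HA u (DY i) (DY j) p). Qed.
Lemma sw_xy u i j p : Sm u -> A p -> dx i (dy j u) p = dy j (dx i u) p.
Proof. exact (schwarz A HA u (DX i) (DY j) p). Qed.

Definition EU u (r : R) := forall q, A q -> sum2 (fun k => yc k q * dy k u q) = r * u q.

Lemma EU_homog u r : Sm u -> homog A r u -> EU u (INR r).
Proof. intros Hu Hh q Hq. now apply (euler_homog A HA). Qed.

Lemma EU_ext u v r : (forall q, A q -> u q = v q) -> EU u r -> EU v r.
Proof. intros H Hu q Hq. rewrite <- H by auto. rewrite <- Hu by auto.
  unfold sum2. rewrite !(dy_loc v u) by (auto; intros; symmetry; auto). reflexivity. Qed.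

Lemma EU_const (c : R) : EU (fun _ => c) 0.
Proof. intros q Hq. unfold sum2. rewrite !dy_const. ring. Qed.

Lemma EU_yc i : EU (yc i) 1.
Proof. intros q Hq. unfold sum2. rewrite !dy_yc. destruct i; cbn; ring. Qed.

Lemma EU_plus u v r : Sm u -> Sm v -> EU u r -> EU v r -> EU (fun q => u q + v q) r.
Proof. intros Hu Hv Eu Ev q Hq. unfold sum2. rewrite !dy_plus by auto.
  specialize (Eu q Hq). specialize (Ev q Hq). unfold sum2 in *. lra. Qed.

Lemma EU_minus u v r : Sm u -> Sm v -> EU u r -> EU v r -> EU (fun q => u q - v q) r.
Proof. intros Hu Hv Eu Ev q Hq. unfold sum2. rewrite !dy_minus by auto.
  specialize (Eu q Hq). specialize (Ev q Hq). unfold sum2 in *. lra. Qed.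

Lemma EU_mult u v r s : Sm u -> Sm v -> EU u r -> EU v s -> EU (fun q => u q * v q) (r + s).
Proof. intros Hu Hv Eu Ev q Hq. unfold sum2. rewrite !dy_mult by auto.
  specialize (Eu q Hq). specialize (Ev q Hq). unfold sum2 in *. 
  transitivity ((yc i1 q * dy i1 u q + yc i2 q * dy i2 u q) * v q +
                u q * (yc i1 q * dy i1 v q + yc i2 q * dy i2 v q)). ring.
  rewrite Eu, Ev. ring. Qed.

Lemma EU_scal (c : R) u r : EU u r -> EU (fun q => c * u q) r.
Proof. intros Eu q Hq. unfold sum2. rewrite !dy_scal.
  specialize (Eu q Hq). unfold sum2 in *.
  transitivity (c * (yc i1 q * dy i1 u q + yc i2 q * dy i2 u q)). ring. rewrite Eu. ring. Qed.

Lemma EU_inv u r : Sm u -> (forall q, A q -> u q <> 0) -> EU u r -> EU (fun q => / u q) (- r).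
Proof. intros Hu Hnz Eu q Hq. specialize (Hnz q Hq). unfold sum2. rewrite !dy_inv by auto.
  specialize (Eu q Hq). unfold sum2 in *.
  transitivity (- (yc i1 q * dy i1 u q + yc i2 q * dy i2 u q) / u q ^ 2). field. auto.
  rewrite Eu. field. auto. Qed.

Lemma EU_sum2 (w : I2 -> pt -> R) r : (forall j, Sm (w j)) -> (forall j, EU (w j) r) ->
  EU (fun q => sum2 (fun j => w j q)) r.
Proof. intros Hw Ew. unfold sum2 at 1. apply EU_plus; auto. Qed.
End Rules.


Ltac sm := cbv beta; repeat first [ assumption | solve [auto] | apply Sm_plus | apply Sm_minus | apply Sm_mult
  | apply Sm_opp | (apply Sm_sum2; intro) | apply Sm_dy | apply Sm_dx | apply Sm_yc | apply Sm_const ].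

Section EU2.
Variable A : pt -> Prop.
Hypothesis HA : open A.
Implicit Types (u v w : pt -> R) (p q : pt).

Lemma EU_dy u r h : Sm A u -> EU A u r -> EU A (dy h u) (r - 1).
Proof.
  intros Hu Eu q Hq.
  assert (D := dy_loc A HA _ _ h q Eu Hq). cbv beta in D. unfold sum2 in D |- *.
  rewrite (dy_plus A) in D by sm. rewrite !(dy_mult A) in D by sm. rewrite !dy_yc, dy_const in D.
  rewrite (sw_yy A HA u h i1), (sw_yy A HA u h i2) in D by auto.
  destruct h; cbn [kd] in D; lra.
Qed.

Lemma EU_dx u r h : Sm A u -> EU A u r -> EU A (dx h u) r.
Proof.
  intros Hu Eu q Hq.
  assert (D := dx_loc A HA _ _ h q Eu Hq). cbv beta in D. unfold sum2 in D |- *.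
  rewrite (dx_plus A) in D by sm. rewrite !(dx_mult A) in D by sm. rewrite !dx_yc, dx_const in D.
  rewrite (sw_xy A HA u h i1), (sw_xy A HA u h i2) in D by auto.
  lra.
Qed.
End EU2.
Lemma EU_r A u r s : r = s -> EU A u r -> EU A u s.
Proof. intros ->; auto. Qed.

Lemma EU_opp A (HA : open A) u r : EU A u r -> EU A (fun q => - u q) r.
Proof. intros Eu. apply (EU_ext A HA (fun q => -1 * u q)). intros; ring. now apply EU_scal. Qed.

Lemma EU_div A (HA : open A) u v r s : Sm A u -> Sm A v -> (forall q, A q -> v q <> 0) ->
  EU A u r -> EU A v s -> EU A (fun q => u q / v q) (r - s).
Proof. intros Hu Hv Hnz Eu Ev. unfold Rdiv. apply EU_mult; auto. now apply Sm_inv.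
  now apply EU_inv. Qed.

Section Fin.
Variable A : pt -> Prop.
Variable F : pt -> R.
Hypothesis HA : open A.
Hypothesis HF : Sm A F.
Hypothesis Hhom : homog A 1 F.
Hypothesis Hdet : forall p, A p -> detg F p <> 0.
Implicit Types (u v w : pt -> R) (p q : pt).

Lemma Sm_Phi : Sm A (F2 F).
Proof. unfold F2. now apply Sm_pow2. Qed.
Hint Resolve Sm_Phi : core.

Lemma Sm_g i j : Sm A (g F i j).
Proof. unfold g. sm. Qed.
Hint Resolve Sm_g : core.

Lemma Sm_detg : Sm A (detg F).
Proof. unfold detg. apply Sm_minus; auto; apply Sm_mult; auto. Qed.
Hint Resolve Sm_detg : core.

Lemma Sm_ginv i j : Sm A (ginv F i j).
Proof. unfold ginv. destruct i, j; apply Sm_div; auto; apply Sm_opp; auto. Qed.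
Hint Resolve Sm_ginv : core.

Definition Psi (l : I2) (p : pt) : R :=
  sum2 (fun k => yc k p * dx k (dy l (F2 F)) p) - dx l (F2 F) p.

Lemma Sm_Psi l : Sm A (Psi l).
Proof. unfold Psi. sm. Qed.
Hint Resolve Sm_Psi : core.

Lemma Gs_Psi i p : Gs F i p = / 4 * sum2 (fun l => ginv F i l p * Psi l p).
Proof. reflexivity. Qed.

Lemma Sm_Gs i : Sm A (Gs F i).
Proof. apply (Sm_ext A HA (fun p => / 4 * sum2 (fun l => ginv F i l p * Psi l p))).
  intros; reflexivity. sm. Qed.
Hint Resolve Sm_Gs : core.

Definition GG (l i k : I2) : pt -> R := dy k (Gij F l i).

Lemma Sm_Gij l i : Sm A (Gij F l i).
Proof. unfold Gij. sm. Qed.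
Hint Resolve Sm_Gij : core.
Lemma Sm_GG l i k : Sm A (GG l i k).
Proof. unfold GG. sm. Qed.
Hint Resolve Sm_GG : core.

Lemma EU_F : EU A F 1.
Proof. apply (EU_r A F (INR 1)). reflexivity. now apply EU_homog. Qed.

Lemma EU_Phi : EU A (F2 F) 2.
Proof. apply (EU_ext A HA (fun q => F q * F q)). intros; unfold F2; ring.
  apply (EU_r A _ (1 + 1)). ring. apply EU_mult; auto using EU_F. Qed.

Lemma EU_g i j : EU A (g F i j) 0.
Proof. unfold g. apply EU_scal. apply (EU_r A _ (2 - 1 - 1)). ring.
  apply (EU_dy A HA); auto. sm. apply (EU_dy A HA); auto. apply EU_Phi. Qed.

Lemma EU_detg : EU A (detg F) 0.
Proof. unfold detg. apply (EU_minus A HA); [sm|sm| |].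
  - apply (EU_r A _ (0 + 0)). ring. apply EU_mult; auto using EU_g.
  - apply (EU_r A _ (0 + 0)). ring. apply EU_mult; auto using EU_g. Qed.

Lemma EU_ginv i j : EU A (ginv F i j) 0.
Proof. destruct i, j; unfold ginv; apply (EU_r A _ (0 - 0)); try ring;
  apply (EU_div A HA); auto using EU_g, EU_detg, EU_opp, Sm_opp. Qed.

Lemma EU_Psi l : EU A (Psi l) 2.
Proof. unfold Psi. apply (EU_minus A HA); [sm|sm| |].
  - apply EU_sum2. intros; sm. intros k. apply (EU_r A _ (1 + 1)). ring.
    apply EU_mult; [sm|sm|apply EU_yc|]. apply (EU_dx A HA); [sm|]. apply (EU_r A _ (2 - 1)). ring.
    apply (EU_dy A HA); auto. apply EU_Phi.
  - apply (EU_dx A HA); auto. apply EU_Phi. Qed.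

Lemma EU_Gs i : EU A (Gs F i) 2.
Proof. apply (EU_ext A HA (fun p => / 4 * sum2 (fun l => ginv F i l p * Psi l p))).
  intros; reflexivity. apply EU_scal. apply EU_sum2. intros; sm.
  intros l. apply (EU_r A _ (0 + 2)). ring. apply EU_mult; auto using EU_ginv, EU_Psi. Qed.

Lemma EU_Gij l i : EU A (Gij F l i) 1.
Proof. unfold Gij. apply (EU_r A _ (2 - 1)). ring. apply (EU_dy A HA); auto using EU_Gs. Qed.

Lemma EU_GG l i k : EU A (GG l i k) 0.
Proof. unfold GG. apply (EU_r A _ (1 - 1)). ring. apply (EU_dy A HA); auto using EU_Gij. Qed.
Hypothesis Hy : forall p, A p -> yc i1 p <> 0 \/ yc i2 p <> 0.

Lemma g_sym i j p : A p -> g F i j p = g F j i p.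
Proof. intros Hp. unfold g. now rewrite (sw_yy A HA). Qed.

Lemma dPhi_g l q : A q -> dy l (F2 F) q = 2 * sum2 (fun j => g F l j q * yc j q).
Proof. intros Hq. assert (E := EU_dy A HA (F2 F) 2 l Sm_Phi EU_Phi q Hq).
  unfold sum2, g in *. rewrite (sw_yy A HA (F2 F) i1 l), (sw_yy A HA (F2 F) i2 l) in E by auto.
  lra. Qed.

Lemma dPhi_F l q : A q -> dy l (F2 F) q = 2 * F q * dy l F q.
Proof. intros Hq. rewrite (dy_ext (F2 F) (fun q => F q * F q)) by (intros; unfold F2; ring).
  rewrite (dy_mult A) by auto. ring. Qed.

Lemma F_nz p : A p -> F p <> 0.
Proof. intros Hp H0. assert (E1 := dPhi_g i1 p Hp). assert (E2 := dPhi_g i2 p Hp).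
  rewrite dPhi_F, H0 in E1, E2 by auto. unfold sum2 in *.
  apply (Hdet p Hp). unfold detg.
  destruct (Hy p Hp) as [Hy1|Hy2].
  - apply (Rmult_eq_reg_r (yc i1 p)); auto.
    transitivity (g F i2 i2 p * (g F i1 i1 p * yc i1 p + g F i1 i2 p * yc i2 p)
                  - g F i1 i2 p * (g F i2 i1 p * yc i1 p + g F i2 i2 p * yc i2 p)). ring.
    replace (g F i1 i1 p * yc i1 p + g F i1 i2 p * yc i2 p) with 0 by lra.
    replace (g F i2 i1 p * yc i1 p + g F i2 i2 p * yc i2 p) with 0 by lra. ring.
  - apply (Rmult_eq_reg_r (yc i2 p)); auto.
    transitivity (g F i1 i1 p * (g F i2 i1 p * yc i1 p + g F i2 i2 p * yc i2 p)
                  - g F i2 i1 p * (g F i1 i1 p * yc i1 p + g F i1 i2 p * yc i2 p)). ring.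
    replace (g F i1 i1 p * yc i1 p + g F i1 i2 p * yc i2 p) with 0 by lra.
    replace (g F i2 i1 p * yc i1 p + g F i2 i2 p * yc i2 p) with 0 by lra. ring.
Qed.

Lemma gG_Psi j q : A q -> sum2 (fun i => g F j i q * Gs F i q) = / 4 * Psi j q.
Proof. intros Hq. specialize (Hdet q Hq). unfold sum2. rewrite !Gs_Psi. unfold sum2, ginv.
  unfold detg in *. destruct j; field; auto. Qed.

Lemma Q_eq q : A q ->
  sum2 (fun l => Gs F l q * dy l (F2 F) q) = / 2 * sum2 (fun k => yc k q * dx k (F2 F) q).
Proof.
  intros Hq. unfold sum2 at 1. rewrite !dPhi_g by auto. unfold sum2.
  transitivity (2 * (yc i1 q * sum2 (fun i => g F i1 i q * Gs F i q)
                   + yc i2 q * sum2 (fun i => g F i2 i q * Gs F i q))).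
  { unfold sum2; rewrite (g_sym i2 i1) by auto; ring. }
  rewrite !gG_Psi by auto. unfold Psi, sum2.
  assert (E1 := EU_dx A HA _ _ i1 Sm_Phi EU_Phi q Hq).
  assert (E2 := EU_dx A HA _ _ i2 Sm_Phi EU_Phi q Hq). unfold sum2 in E1, E2.
  rewrite <- !(sw_xy A HA (F2 F)) in E1, E2 by auto.
  nra.
Qed.

Lemma delta_Phi h p : A p -> delta F h (F2 F) p = 0.
Proof.
  intros Hp. assert (D := dy_loc A HA _ _ h p Q_eq Hp). cbv beta in D.
  rewrite (dy_sum2 A) in D by (intros; sm).
  rewrite dy_scal, (dy_sum2 A) in D by (intros; sm).
  unfold sum2 in D. rewrite !(dy_mult A), !dy_yc in D by sm.
  rewrite <- !(sw_xy A HA (F2 F)) in D by auto.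
  assert (E := gG_Psi h p Hp). unfold sum2, g, Psi in E.
  unfold delta, Gij, sum2. destruct h; cbn [kd] in D; unfold sum2 in E; nra.
Qed.
Hint Resolve Sm_Phi Sm_g Sm_detg Sm_ginv Sm_Psi Sm_Gs Sm_Gij Sm_GG : core.

Lemma Sm_delta k u : Sm A u -> Sm A (delta F k u).
Proof. intros Hu. unfold delta. sm. Qed.
Hint Resolve Sm_delta : core.

Lemma delta_plus k u v p : Sm A u -> Sm A v -> A p ->
  delta F k (fun q => u q + v q) p = delta F k u p + delta F k v p.
Proof. intros Hu Hv Hp. unfold delta, sum2. rewrite (dx_plus A), !(dy_plus A) by auto. ring. Qed.
Lemma delta_minus k u v p : Sm A u -> Sm A v -> A p ->
  delta F k (fun q => u q - v q) p = delta F k u p - delta F k v p.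
Proof. intros Hu Hv Hp. unfold delta, sum2. rewrite (dx_minus A HA), !(dy_minus A HA) by auto. ring. Qed.
Lemma delta_mult k u v p : Sm A u -> Sm A v -> A p ->
  delta F k (fun q => u q * v q) p = delta F k u p * v p + u p * delta F k v p.
Proof. intros Hu Hv Hp. unfold delta, sum2. rewrite (dx_mult A), !(dy_mult A) by auto. ring. Qed.
Lemma delta_scal k (c : R) u p : delta F k (fun q => c * u q) p = c * delta F k u p.
Proof. unfold delta, sum2. rewrite dx_scal, !dy_scal. ring. Qed.
Lemma delta_const k (c : R) p : delta F k (fun _ => c) p = 0.
Proof. unfold delta, sum2. rewrite dx_const, !dy_const. ring. Qed.
Lemma delta_loc k u v p : (forall q, A q -> u q = v q) -> A p -> delta F k u p = delta F k v p.
Proof. intros H Hp. unfold delta, sum2. rewrite (dx_loc A HA u v), (dy_loc A HA u v i1), (dy_loc A HA u v i2) by auto.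
  reflexivity. Qed.
Lemma delta_ext k u v p : (forall q, u q = v q) -> delta F k u p = delta F k v p.
Proof. intros H. unfold delta, sum2. rewrite (dx_ext u v), (dy_ext u v i1), (dy_ext u v i2) by auto.
  reflexivity. Qed.
Lemma delta_sum2 k (w : I2 -> pt -> R) p : (forall j, Sm A (w j)) -> A p ->
  delta F k (fun q => sum2 (fun j => w j q)) p = sum2 (fun j => delta F k (w j) p).
Proof. intros Hw Hp. unfold sum2 at 1. rewrite delta_plus by (auto; sm). reflexivity. Qed.
Lemma delta_inv k u p : Sm A u -> A p -> u p <> 0 ->
  delta F k (fun q => / u q) p = - delta F k u p / u p ^ 2.
Proof. intros Hu Hp Hnz. unfold delta, sum2. rewrite (dx_inv A), !(dy_inv A) by auto. field. auto. Qed.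

Lemma delta_F h p : A p -> delta F h F p = 0.
Proof. intros Hp. assert (E := delta_Phi h p Hp).
  rewrite (delta_ext h (F2 F) (fun q => F q * F q)) in E by (intros; unfold F2; ring).
  rewrite delta_mult in E by auto.
  assert (Fn := F_nz p Hp). apply (Rmult_eq_reg_l (2 * F p)). lra.
  intro H0. apply Fn. lra. Qed.

Lemma CM h k u p : Sm A u -> A p ->
  dy h (delta F k u) p = delta F k (dy h u) p - sum2 (fun l => GG l k h p * dy l u p).
Proof.
  intros Hu Hp. unfold delta at 1.
  rewrite (dy_minus A HA) by (auto; sm). rewrite (dy_sum2 A) by (intros; sm).
  unfold sum2. rewrite !(dy_mult A) by (auto; sm).
  unfold delta, GG, sum2. rewrite (sw_xy A HA u k h) by auto.
  rewrite (sw_yy A HA u h i1), (sw_yy A HA u h i2) by auto. ring.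
Qed.
Hint Resolve Sm_delta : core.
Definition Lg (j i k : I2) (p : pt) : R :=
  delta F k (g F j i) p - sum2 (fun l => GG l k j p * g F l i p)
  - sum2 (fun l => GG l k i p * g F j l p).

Lemma Sm_Lg j i k : Sm A (Lg j i k).
Proof. unfold Lg. sm. Qed.
Hint Resolve Sm_Lg : core.

Lemma Sm_Cart h j i : Sm A (Cart F h j i).
Proof. unfold Cart. sm. Qed.
Hint Resolve Sm_Cart : core.

Lemma dg_C h j i q : dy h (g F j i) q = 2 * Cart F h j i q.
Proof. unfold g at 1. rewrite dy_scal.
  change (fun p => dy j (dy i (F2 F)) p) with (dy j (dy i (F2 F))). unfold Cart. field. Qed.

Lemma E1 k i q : A q -> delta F k (dy i (F2 F)) q = sum2 (fun l => GG l k i q * dy l (F2 F) q).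
Proof. intros Hq. assert (H := CM i k (F2 F) q Sm_Phi Hq).
  rewrite (dy_zero A HA) in H by (auto; intros; apply delta_Phi; auto). lra. Qed.

Lemma Lg_formula j i k q : A q ->
  2 * Lg j i k q = sum2 (fun l => dy j (GG l k i) q * dy l (F2 F) q).
Proof.
  intros Hq. assert (D := dy_loc A HA _ _ j q (E1 k i) Hq). cbv beta in D.
  rewrite CM in D by (auto; sm). rewrite (dy_sum2 A) in D by (intros; sm).
  unfold sum2 in D. rewrite !(dy_mult A) in D by (auto; sm).
  rewrite (delta_ext k (dy j (dy i (F2 F))) (fun q => 2 * g F j i q)) in D
    by (intros; unfold g; field).
  rewrite delta_scal in D.
  unfold Lg, sum2. change (g F ?a ?b q) with (/2 * dy a (dy b (F2 F)) q). lra.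
Qed.

Lemma Gij_eq l i : Gij F l i = dy i (Gs F l).
Proof. reflexivity. Qed.

Lemma Y1 l a q : A q -> yc i1 q * GG l i1 a q + yc i2 q * GG l i2 a q = Gij F l a q.
Proof. intros Hq. assert (E := EU_Gij l a q Hq). unfold sum2 in E. unfold GG in *. rewrite !Gij_eq in *.
  rewrite (sw_yy A HA (Gs F l) a i1), (sw_yy A HA (Gs F l) a i2) by auto. lra. Qed.

Lemma Y3 l h a q : A q -> yc i1 q * dy h (GG l i1 a) q + yc i2 q * dy h (GG l i2 a) q = 0.
Proof. intros Hq. assert (E := EU_GG l a h q Hq). unfold sum2 in E.
  assert (S : forall k, dy h (GG l k a) q = dy k (GG l a h) q).
  { intros k. unfold GG. rewrite !Gij_eq.
    rewrite (dy_loc A HA (dy a (dy k (Gs F l))) (dy k (dy a (Gs F l)))) by (auto; intros; apply (sw_yy A HA); auto).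
    apply (sw_yy A HA); auto. sm. }
  rewrite !S. lra. Qed.

Lemma Lg_y j i q : A q -> sum2 (fun k => yc k q * Lg j i k q) = 0.
Proof. intros Hq.
  assert (L1 := Lg_formula j i i1 q Hq). assert (L2 := Lg_formula j i i2 q Hq).
  assert (Y31 := Y3 i1 j i q Hq). assert (Y32 := Y3 i2 j i q Hq).
  unfold sum2 in *.
  apply (Rmult_eq_reg_l 2); [|lra].
  transitivity (yc i1 q * (2 * Lg j i i1 q) + yc i2 q * (2 * Lg j i i2 q)). ring.
  rewrite L1, L2.
  transitivity ((yc i1 q * dy j (GG i1 i1 i) q + yc i2 q * dy j (GG i1 i2 i) q) * dy i1 (F2 F) q
    + (yc i1 q * dy j (GG i2 i1 i) q + yc i2 q * dy j (GG i2 i2 i) q) * dy i2 (F2 F) q). ring.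
  rewrite Y31, Y32. ring.
Qed.
Lemma dLg h j i k p : A p ->
  dy h (Lg j i k) p = 2 * delta F k (Cart F h j i) p
    - sum2 (fun l => GG l k h p * (2 * Cart F l j i p))
    - sum2 (fun l => dy h (GG l k j) p * g F l i p + GG l k j p * (2 * Cart F h l i p))
    - sum2 (fun l => dy h (GG l k i) p * g F j l p + GG l k i p * (2 * Cart F h j l p)).
Proof.
  intros Hp. unfold Lg.
  rewrite (dy_minus A HA) by (auto; sm). rewrite (dy_minus A HA) by (auto; sm).
  rewrite !(dy_sum2 A) by (intros; sm). unfold sum2 at 1 2.
  rewrite !(dy_mult A) by auto.
  rewrite CM by auto. rewrite !dg_C.
  rewrite (delta_ext k (dy h (g F j i)) (fun q => 2 * Cart F h j i q)) by (intros; apply dg_C).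
  rewrite delta_scal. unfold sum2. rewrite !dg_C. ring.
Qed.

Definition yC (h j i : I2) (p : pt) : R :=
  sum2 (fun k => yc k p * delta F k (Cart F h j i) p)
  - sum2 (fun l => Gij F l h p * Cart F l j i p + Gij F l j p * Cart F h l i p
                   + Gij F l i p * Cart F h j l p).

Lemma Lg_C j i h p : A p -> Lg j i h p = -2 * yC h j i p.
Proof.
  intros Hp.
  assert (D := dy_zero A HA _ h p (Lg_y j i) Hp).
  rewrite (dy_sum2 A) in D by (intros; sm). unfold sum2 in D.
  rewrite !(dy_mult A) in D by (auto; sm). rewrite !dy_yc in D.
  assert (S : yc i1 p * dy h (Lg j i i1) p + yc i2 p * dy h (Lg j i i2) p = 2 * yC h j i p).
  { rewrite !dLg by auto.
    transitivity (2 * (yc i1 p * delta F i1 (Cart F h j i) p + yc i2 p * delta F i2 (Cart F h j i) p)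
      - 2 * sum2 (fun l => (yc i1 p * GG l i1 h p + yc i2 p * GG l i2 h p) * Cart F l j i p)
      - sum2 (fun l => (yc i1 p * dy h (GG l i1 j) p + yc i2 p * dy h (GG l i2 j) p) * g F l i p)
      - 2 * sum2 (fun l => (yc i1 p * GG l i1 j p + yc i2 p * GG l i2 j p) * Cart F h l i p)
      - sum2 (fun l => (yc i1 p * dy h (GG l i1 i) p + yc i2 p * dy h (GG l i2 i) p) * g F j l p)
      - 2 * sum2 (fun l => (yc i1 p * GG l i1 i p + yc i2 p * GG l i2 i p) * Cart F h j l p)).
    { unfold sum2. ring. }
    unfold sum2. rewrite !Y1 by auto. rewrite !Y3 by auto. unfold yC, sum2. ring. }
  destruct h; cbn [kd] in D; lra.
Qed.
Section Frame2.
Variable eps : R.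
Variable m : I2 -> pt -> R.
Variable I : pt -> R.
Hypothesis Heps : eps = 1 \/ eps = -1.
Hypothesis Hm : forall i, Sm A (m i).
Hypothesis HI : Sm A I.
Hypothesis Hg : forall p i j, A p -> g F i j p = ell_low F i p * ell_low F j p + eps * m i p * m j p.
Hypothesis HC : forall p i j k, A p -> F p * Cart F i j k p = I p * m i p * m j p * m k p.
Hypothesis HL : forall p, A p -> comma1 F I p = 0.
Hint Resolve Hm HI : core.

Lemma m_nz p : A p -> m i1 p <> 0 \/ m i2 p <> 0.
Proof. intros Hp. destruct (Req_dec (m i1 p) 0) as [H1|H1]; [|now left].
  destruct (Req_dec (m i2 p) 0) as [H2|H2]; [|now right].
  exfalso. apply (Hdet p Hp). unfold detg. rewrite !Hg by auto. rewrite H1, H2. ring. Qed.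

Lemma eps_nz : eps <> 0.
Proof. destruct Heps; lra. Qed.

Lemma sym_zero (X : I2 -> R) p : A p -> (forall j i, X j * m i p + m j p * X i = 0) ->
  forall a, X a = 0.
Proof. intros Hp H a. destruct (m_nz p Hp) as [Hc|Hc].
  - assert (Xc : X i1 = 0). { specialize (H i1 i1). apply (Rmult_eq_reg_r (m i1 p)); auto. lra. }
    specialize (H a i1). rewrite Xc in H. apply (Rmult_eq_reg_r (m i1 p)); auto. lra.
  - assert (Xc : X i2 = 0). { specialize (H i2 i2). apply (Rmult_eq_reg_r (m i2 p)); auto. lra. }
    specialize (H a i2). rewrite Xc in H. apply (Rmult_eq_reg_r (m i2 p)); auto. lra.
Qed.

Definition M (a k : I2) (p : pt) : R := delta F k (m a) p - sum2 (fun l => GG l k a p * m l p).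

Lemma delta_ell j k p : A p -> delta F k (dy j F) p = sum2 (fun l => GG l k j p * dy l F p).
Proof. intros Hp. assert (H := CM j k F p HF Hp).
  rewrite (dy_zero A HA) in H by (auto; intros; apply delta_F; auto). lra. Qed.

Lemma Lg_frame j i k p : A p -> Lg j i k p = eps * (M j k p * m i p + m j p * M i k p).
Proof.
  intros Hp. unfold Lg.
  rewrite (delta_loc k (g F j i) (fun q => dy j F q * dy i F q + eps * m j q * m i q))
    by (auto; intros; rewrite Hg by auto; reflexivity).
  rewrite delta_plus by sm. rewrite !delta_mult by sm. rewrite delta_const.
  rewrite !delta_ell by auto.
  unfold M, sum2. rewrite !Hg by auto. unfold ell_low. ring.
Qed.

Definition Z (a : I2) (p : pt) : R := sum2 (fun k => yc k p * M a k p).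

Lemma Z_zero a p : A p -> Z a p = 0.
Proof. intros Hp. apply (sym_zero (fun a => Z a p) p Hp). intros j i.
  assert (H := Lg_y j i p Hp). unfold sum2 in H. rewrite !Lg_frame in H by auto.
  apply (Rmult_eq_reg_l eps); [|apply eps_nz]. unfold Z, sum2. lra. Qed.

Lemma Cart_eq h j i q : A q -> Cart F h j i q = I q * m h q * m j q * m i q * / F q.
Proof. intros Hq. rewrite <- HC by auto. field. now apply F_nz. Qed.

Lemma comma_sum p : A p -> sum2 (fun k => yc k p * delta F k I p) = 0.
Proof. intros Hp. assert (H := HL p Hp). unfold comma1, ell_up, sum2 in *.
  apply (Rmult_eq_reg_l (/ F p)). rewrite Rmult_0_r. rewrite <- H. cbv beta. field. now apply F_nz.
  apply Rinv_neq_0_compat, F_nz, Hp. Qed.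

Lemma yC_zero h j i p : A p -> yC h j i p = 0.
Proof.
  intros Hp. assert (Fn := F_nz p Hp).
  assert (DC : forall k, delta F k (Cart F h j i) p =
     (delta F k I p * m h p * m j p * m i p + I p * delta F k (m h) p * m j p * m i p
      + I p * m h p * delta F k (m j) p * m i p + I p * m h p * m j p * delta F k (m i) p) / F p).
  { intros k. rewrite (delta_loc k _ (fun q => I q * m h q * m j q * m i q * / F q))
      by (auto; intros; now apply Cart_eq).
    rewrite !delta_mult by (auto; sm; apply Sm_inv; auto; apply F_nz).
    rewrite delta_inv, delta_F by auto. field. auto. }
  assert (E : yC h j i p = sum2 (fun k => yc k p * delta F k I p) * m h p * m j p * m i p / F p
     + I p / F p * (Z h p * m j p * m i p + m h p * Z j p * m i p + m h p * m j p * Z i p)).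
  { unfold yC, sum2. rewrite !DC. repeat rewrite <- (Y1 _ _ p Hp). rewrite !Cart_eq by auto.
    unfold Z, M, sum2. field. auto. }
  rewrite E, comma_sum, !Z_zero by auto. field. auto.
Qed.

Lemma M_zero a k p : A p -> M a k p = 0.
Proof. intros Hp. apply (sym_zero (fun a => M a k p) p Hp). intros j i.
  assert (H := Lg_C j i k p Hp). rewrite yC_zero, Lg_frame in H by auto.
  apply (Rmult_eq_reg_l eps); [|apply eps_nz]. lra. Qed.
Lemma Sm_mup i : Sm A (mup F m i).
Proof. unfold mup. sm. Qed.
Hint Resolve Sm_mup : core.

Lemma Sm_semi2 u : Sm A u -> Sm A (semi2 F eps m u).
Proof. intros Hu. unfold semi2. sm. Qed.

Lemma m_lower a q : A q -> m a q = sum2 (fun b => g F a b q * mup F m b q).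
Proof. intros Hq. specialize (Hdet q Hq). unfold mup, ginv, sum2. unfold detg in *.
  destruct a; field; auto. Qed.

Lemma dg_par a b k p : A p ->
  delta F k (g F a b) p = sum2 (fun l => GG l k a p * g F l b p) + sum2 (fun l => GG l k b p * g F a l p).
Proof. intros Hp. assert (H := Lg_C a b k p Hp). rewrite yC_zero in H by auto.
  unfold Lg in H. lra. Qed.

Lemma dm_par a k p : A p -> delta F k (m a) p = sum2 (fun l => GG l k a p * m l p).
Proof. intros Hp. assert (H := M_zero a k p Hp). unfold M in H. lra. Qed.

Lemma N_zero k p : A p -> forall b,
  delta F k (mup F m b) p + sum2 (fun c => GG b k c p * mup F m c p) = 0.
Proof.
  intros Hp.
  assert (K : forall a, sum2 (fun b => g F a b p *
      (delta F k (mup F m b) p + sum2 (fun c => GG b k c p * mup F m c p))) = 0).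
  { intros a. assert (D := delta_loc k (m a) (fun q => sum2 (fun b => g F a b q * mup F m b q)) p
       (m_lower a) Hp).
    rewrite delta_sum2 in D by (auto; intros; sm). unfold sum2 in D.
    rewrite !delta_mult in D by auto.
    rewrite dm_par, !dg_par in D by auto. unfold sum2 in D |- *.
    rewrite !(m_lower _ p Hp) in D. unfold sum2 in D. lra. }
  assert (K1 := K i1). assert (K2 := K i2). unfold sum2 in K1, K2 |- *.
  set (N1 := delta F k (mup F m i1) p + (GG i1 k i1 p * mup F m i1 p + GG i1 k i2 p * mup F m i2 p)) in *.
  set (N2 := delta F k (mup F m i2) p + (GG i2 k i1 p * mup F m i1 p + GG i2 k i2 p * mup F m i2 p)) in *.
  assert (Hd := Hdet p Hp). unfold detg in Hd.
  assert (A1 : N1 * (g F i1 i1 p * g F i2 i2 p - g F i1 i2 p * g F i2 i1 p) = 0).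
  { transitivity (g F i2 i2 p * (g F i1 i1 p * N1 + g F i1 i2 p * N2)
       - g F i1 i2 p * (g F i2 i1 p * N1 + g F i2 i2 p * N2)). ring. rewrite K1, K2. ring. }
  assert (A2 : N2 * (g F i1 i1 p * g F i2 i2 p - g F i1 i2 p * g F i2 i1 p) = 0).
  { transitivity (g F i1 i1 p * (g F i2 i1 p * N1 + g F i2 i2 p * N2)
       - g F i2 i1 p * (g F i1 i1 p * N1 + g F i1 i2 p * N2)). ring. rewrite K1, K2. ring. }
  intros b. destruct b.
  - apply Rmult_integral in A1. destruct A1; [auto|contradiction].
  - apply Rmult_integral in A2. destruct A2; [auto|contradiction].
Qed.

Lemma semi2_hc u : Sm A u -> (forall q k, A q -> delta F k u q = 0) ->
  forall p k, A p -> delta F k (semi2 F eps m u) p = 0.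
Proof.
  intros Hu Hd p k Hp. unfold semi2.
  rewrite delta_mult by (auto; sm). rewrite delta_mult by (auto; sm).
  rewrite delta_const, delta_F by auto.
  rewrite delta_sum2 by (auto; intros; sm). unfold sum2.
  rewrite !delta_mult by (auto; sm).
  assert (DU : forall i, delta F k (dy i u) p = sum2 (fun l => GG l k i p * dy l u p)).
  { intros i. assert (H := CM i k u p Hu Hp). rewrite (dy_zero A HA) in H by auto. lra. }
  rewrite !DU. assert (N1 := N_zero k p Hp i1). assert (N2 := N_zero k p Hp i2).
  unfold sum2 in *.
  transitivity (eps * F p * ((delta F k (mup F m i1) p + (GG i1 k i1 p * mup F m i1 p + GG i1 k i2 p * mup F m i2 p)) * dy i1 u p
     + (delta F k (mup F m i2) p + (GG i2 k i1 p * mup F m i1 p + GG i2 k i2 p * mup F m i2 p)) * dy i2 u p)).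
  ring. rewrite N1, N2. ring.
Qed.
End Frame2.
End Fin.

Theorem lemma2p4 (A : pt -> Prop) (F : pt -> R) (eps : R)
  (m : I2 -> pt -> R) (I : pt -> R) (f : pt -> R) :
  pseudo_finsler A F ->
  berwald_frame A F eps m I ->
  (forall p, A p -> comma1 F I p = 0) ->   (* Landsberg: I_{,1} = 0 *)
  smooth_on A f -> homog A 0 f ->
  horiz_const A F f ->
  horiz_const A F (semi2 F eps m f) /\
  horiz_const A F (semi2 F eps m (semi2 F eps m f)).
Proof.
  intros [[HA [Hy _]] [HF [Hhom Hdet]]] [Heps [Hm [HI [Hg HC]]]] HL Hf _ Hhc.
  pose proof (semi2_hc A F HA HF Hhom Hdet Hy eps m I Heps Hm HI Hg HC HL) as K.
  assert (H1 : horiz_const A F (semi2 F eps m f)).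
  { intros p i Hp. apply (K f Hf); auto. }
  split; [exact H1|].
  intros p i Hp. apply K; auto.
  exact (Sm_semi2 A F HA HF Hdet eps m Hm f Hf).
Qed.
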